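(* Let $\lambda\in(0,\infty)^E$ satisfy the triangle inequalities at every vertex: whenever $e,f,g$ are the three edges at a vertex, $\lambda(e)\le\lambda(f)+\lambda(g)$, $\lambda(f)\le\lambda(e)+\lambda(g)$ and $\lambda(g)\le\lambda(e)+\lambda(f)$. Let $\mu=\min_{e\in E}\lambda(e)$. Then $\rho<\frac{8V}{\mu}$.
   Context: $\Gamma$ is a finite trivalent graph with edge set $E$ and $V$ vertices. For $\lambda\in(0,\infty)^E$ define $$\rho=2\sum_{v}\Big(\frac{\lambda(e_v)}{\lambda(f_v)\lambda(g_v)}+\frac{\lambda(f_v)}{\lambda(e_v)\lambda(g_v)}+\frac{\lambda(g_v)}{\lambda(e_v)\lambda(f_v)}\Big),$$ where the sum is over the vertices $v$ and $e_v,f_v,g_v$ are the three edges at $v$. For an ideal triangulation dual graph, $\rho$ equals twice the sum of all simplicial coordinates, i.e. the sum of the $n$ puncture sums $\rho_i$. *)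

(* Defs.v *)
From HB Require Import structures.
From mathcomp Require Import all_boot all_order all_algebra.
Set Implicit Arguments. Unset Strict Implicit. Unset Printing Implicit Defensive.
Import Order.TTheory GRing.Theory Num.Theory.
Local Open Scope ring_scope.

(* A finite trivalent graph (loops and multiple edges allowed), given by
   vertex type Vt, edge type Et and, for each vertex v, its three edge-ends
   inc v 0, inc v 1, inc v 2.  Every edge has exactly two ends (a loop at v
   occupies two of the three slots of v). *)
Definition trivalent (Vt Et : finType) (inc : Vt -> 'I_3 -> Et) : Prop :=
  forall e : Et, #|[set p : Vt * 'I_3 | inc p.1 p.2 == e]| = 2%N.

Definition i0 : 'I_3 := @Ordinal 3 0 isT.
Definition i1 : 'I_3 := @Ordinal 3 1 isT.
Definition i2 : 'I_3 := @Ordinal 3 2 isT.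

Definition rho (R : realFieldType) (Vt Et : finType)
    (inc : Vt -> 'I_3 -> Et) (lam : Et -> R) : R :=
  2 * \sum_(v : Vt)
      (let a := lam (inc v i0) in let b := lam (inc v i1) in
       let c := lam (inc v i2) in
       a / (b * c) + b / (a * c) + c / (a * b)).

(* minimum of lam over the (finite) edge set; 0 if there are no edges *)
Definition lam_min (R : realFieldType) (Et : finType) (lam : Et -> R) : R :=
  match [pick e : Et] with
  | Some e0 => \big[Num.min/lam e0]_(e : Et) lam e
  | None => 0
  end.

(* Main.v *)
Require Import Defs.
From HB Require Import structures.
From mathcomp Require Import all_boot all_order all_algebra.
From mathcomp Require Import ring lra.
Import Order.TTheory GRing.Theory Num.Theory.
Local Open Scope ring_scope.

Lemma aux (R:realFieldType) (x y z m : R) : 0<m -> m<=x -> x<=y -> y<=z -> z<=x+y ->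
  m*(x*x+y*y+z*z) < 4*(x*y*z).
Proof.
move=> *.
have h1 : (z-y)*(z-(x+y)) <= 0 by apply: mulr_ge0_le0; lra.
have h2 : (z-y)*(x-2*y) <= 0 by apply: mulr_ge0_le0; lra.
have h3 : x*x+y*y+z*z < 4*(y*z) by nra.
have h4 : m*(x*x+y*y+z*z) <= x*(x*x+y*y+z*z) by apply: ler_wpM2r; nra.
nra.
Qed.
Lemma key (R:realFieldType) (a b c m : R) : 0 < m -> m <= a -> m <= b -> m <= c ->
  a <= b + c -> b <= a + c -> c <= a + b -> m*(a*a+b*b+c*c) < 4*(a*b*c).
Proof.
move=> m0 ma mb mc h1 h2 h3.
case/orP: (le_total a b) => ab; case/orP: (le_total b c) => bc; case/orP: (le_total a c) => ac.
all: first [ have := @aux R a b c m m0 ltac:(lra) ltac:(lra) ltac:(lra) ltac:(lra); lra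
           | have := @aux R a c b m m0 ltac:(lra) ltac:(lra) ltac:(lra) ltac:(lra); lra
           | have := @aux R b a c m m0 ltac:(lra) ltac:(lra) ltac:(lra) ltac:(lra); lra
           | have := @aux R b c a m m0 ltac:(lra) ltac:(lra) ltac:(lra) ltac:(lra); lra
           | have := @aux R c a b m m0 ltac:(lra) ltac:(lra) ltac:(lra) ltac:(lra); lra
           | have := @aux R c b a m m0 ltac:(lra) ltac:(lra) ltac:(lra) ltac:(lra); lra ].
Qed.

Lemma vert_bound (R : realFieldType) (a b c m : R) : 0 < m -> m <= a -> m <= b -> m <= c ->
  a <= b + c -> b <= a + c -> c <= a + b ->
  a / (b * c) + b / (a * c) + c / (a * b) < 4 / m.
Proof.
move=> m0 ma mb mc h1 h2 h3.
have a0 : 0 < a by lra. have b0 : 0 < b by lra. have c0 : 0 < c by lra.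
have key := @key R a b c m m0 ma mb mc h1 h2 h3.
rewrite -subr_lt0.
have -> : a / (b * c) + b / (a * c) + c / (a * b) - 4 / m
   = (m*(a*a+b*b+c*c) - 4*(a*b*c)) / (m*a*b*c).
  by field; rewrite ?mulf_neq0 ?gt_eqF //.
rewrite pmulr_llt0; first lra.
by rewrite invr_gt0 !mulr_gt0.
Qed.

Theorem mainTheorem5 (R : realFieldType) (Vt Et : finType)
    (inc : Vt -> 'I_3 -> Et) (lam : Et -> R) :
  trivalent inc ->
  (0 < #|Vt|)%N ->
  (forall e, 0 < lam e) ->
  (forall v,
     [/\ lam (inc v i0) <= lam (inc v i1) + lam (inc v i2),
         lam (inc v i1) <= lam (inc v i0) + lam (inc v i2) &
         lam (inc v i2) <= lam (inc v i0) + lam (inc v i1)]) ->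
  rho inc lam < 8 * (#|Vt|)%:R / lam_min lam.
Proof.
move=> _ hV hpos htri.
have [m [m0 mle]] : exists m, 0 < m /\ (forall e, m <= lam e) /\ lam_min lam = m.
  rewrite /lam_min; case: pickP => [e0 _|none].
    exists (\big[Num.min/lam e0]_(e : Et) lam e); split; last split => //.
      by apply: (big_ind (fun x => 0 < x)) => // x y hx hy; rewrite lt_min hx hy.
    by move=> e; apply: bigmin_le.
  exfalso; move/card_gt0P: hV => [v _].
  by have := none (inc v i0).
case: mle => mle ->.
rewrite /rho.
have -> : 8 * (#|Vt|)%:R / m = 2 * ((4/m) *+ #|Vt|).
  by rewrite -mulr_natr; field; rewrite gt_eqF.
rewrite ltr_pM2l // -sumr_const.
apply: ltr_sum => [|v _ /=].
  by move/card_gt0P: hV => [v _]; apply/hasP; exists v; rewrite ?mem_index_enum.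
case: (htri v) => h1 h2 h3.
by apply: vert_bound.
Qed.
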